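(* The class of minus-algebras is a proper quasivariety: it is not closed under homomorphic images, so it cannot be axiomatised by identities alone.
   Context: A minus-algebra is an algebra $(A,\circ,-)$ with two binary operations satisfying: $x\circ y=y-(y-x)$; $(A,\circ)$ is a right normal band (a semigroup with $x\circ x=x$ and $(x\circ y)\circ z=(y\circ x)\circ z$); there is an element $0$ with $x-x=0$ for all $x$; $x\circ0=0\circ x=0$; $(x-y)\circ x=x-y$; $(x-y)\circ y=0$; $(x-y)\circ z=(x\circ z)-y$; and the quasi-identity $s-x=t-x\ \&\ x\circ s=x\circ t\Rightarrow s=t$. *)

(* Defs.v *)
(* A minus-algebra: (A, circ, minus) with two binary operations satisfying
   the axioms of the paper.  The constant 0 is existentially quantified
   (it is not part of the signature). *)
Definition is_minus_algebra (A : Type) (circ minus : A -> A -> A) : Prop :=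
  (forall x y, circ x y = minus y (minus y x)) /\
  (forall x y z, circ (circ x y) z = circ x (circ y z)) /\
  (forall x, circ x x = x) /\
  (forall x y z, circ (circ x y) z = circ (circ y x) z) /\
  (exists zero : A,
     (forall x, minus x x = zero) /\
     (forall x, circ x zero = zero /\ circ zero x = zero) /\
     (forall x y, circ (minus x y) y = zero)) /\
  (forall x y, circ (minus x y) x = minus x y) /\
  (forall x y z, circ (minus x y) z = minus (circ x z) y) /\
  (forall s t x, minus s x = minus t x -> circ x s = circ x t -> s = t).

Definition is_hom {A B : Type} (circA minusA : A -> A -> A)
  (circB minusB : B -> B -> B) (f : A -> B) : Prop :=
  (forall x y, f (circA x y) = circB (f x) (f y)) /\
  (forall x y, f (minusA x y) = minusB (f x) (f y)).

Definition surjective {A B : Type} (f : A -> B) : Prop :=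
  forall b, exists a, f a = b.

(* Main.v *)
Require Import Defs.

Definition restr (a b : option bool) : option bool :=
  match a with None => None | Some _ => b end.
Definition sub (a b : option bool) : option bool :=
  match b with None => a | Some _ => None end.

Definition A2 : Type := (option bool * option bool)%type.
Definition circA (x y : A2) : A2 := (restr (fst x) (fst y), restr (snd x) (snd y)).
Definition minusA (x y : A2) : A2 := (sub (fst x) (fst y), sub (snd x) (snd y)).

Inductive B6 := Z | P | Q | C | D | E.

Definition fB (x : A2) : B6 :=
  match x with
  | (None, None) => Z
  | (Some _, None) => P
  | (None, Some _) => Q
  | (Some a, Some b) => match a, b with true, true => C | false, false => C | true, false => D | false, true => E end
  end.

Definition gB (b : B6) : A2 :=
  match b with
  | Z => (None, None) | P => (Some true, None) | Q => (None, Some true)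
  | C => (Some true, Some true) | D => (Some true, Some false)
  | E => (Some false, Some true)
  end.

Definition circB (x y : B6) : B6 := fB (circA (gB x) (gB y)).
Definition minusB (x y : B6) : B6 := fB (minusA (gB x) (gB y)).

Lemma quasi1 (s t x : option bool) : sub s x = sub t x -> restr x s = restr x t -> s = t.
Proof. destruct s as [[|]|], t as [[|]|], x as [[|]|]; simpl; congruence. Qed.

Lemma A_minus : is_minus_algebra A2 circA minusA.
Proof.
  unfold is_minus_algebra, circA, minusA.
  repeat split.
  - intros [[[|]|] [[|]|]] [[[|]|] [[|]|]]; reflexivity.
  - intros [[[|]|] [[|]|]] [[[|]|] [[|]|]] [[[|]|] [[|]|]]; reflexivity.
  - intros [[[|]|] [[|]|]]; reflexivity.
  - intros [[[|]|] [[|]|]] [[[|]|] [[|]|]] [[[|]|] [[|]|]]; reflexivity.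
  - exists (None, None). split; [|split].
    + intros [[[|]|] [[|]|]]; reflexivity.
    + intros [[[|]|] [[|]|]]; split; reflexivity.
    + intros [[[|]|] [[|]|]] [[[|]|] [[|]|]]; reflexivity.
  - intros [[[|]|] [[|]|]] [[[|]|] [[|]|]]; reflexivity.
  - intros [[[|]|] [[|]|]] [[[|]|] [[|]|]] [[[|]|] [[|]|]]; reflexivity.
  - intros [s1 s2] [t1 t2] [x1 x2] H1 H2; simpl in *.
    injection H1 as Ha Hb. injection H2 as Hc Hd.
    f_equal; eapply quasi1; eassumption.
Qed.

Theorem proposition5p2 :
  exists (A B : Type) (circA minusA : A -> A -> A) (circB minusB : B -> B -> B)
         (f : A -> B),
    is_minus_algebra A circA minusA /\
    is_hom circA minusA circB minusB f /\
    surjective f /\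
    ~ is_minus_algebra B circB minusB.
Proof.
  exists A2, B6, circA, minusA, circB, minusB, fB.
  split; [exact A_minus|].
  split; [split|split].
  - intros [[[|]|] [[|]|]] [[[|]|] [[|]|]]; reflexivity.
  - intros [[[|]|] [[|]|]] [[[|]|] [[|]|]]; reflexivity.
  - intros b; exists (gB b); destruct b; reflexivity.
  - intros H. destruct H as [_ [_ [_ [_ [_ [_ [_ Hq]]]]]]].
    specialize (Hq D E P eq_refl eq_refl). discriminate.
Qed.
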